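(* Let $k\ge1$, $-\frac{\pi}{2}\le\theta_1<\theta_2<\dots<\theta_{k+1}\le\frac{\pi}{2}$ and $\theta_{\min}=\min_{p\ne j}|\theta_p-\theta_j|$. Then $$\min_{\hat\theta_1,\dots,\hat\theta_k\in\mathbb R}\|\eta_{k+1,k}(\theta_1,\dots,\theta_{k+1},\hat\theta_1,\dots,\hat\theta_k)\|_\infty\ge\xi(k)\,\theta_{\min}^k.$$
   Context: For $z_1,\dots,z_p,\hat z_1,\dots,\hat z_q\in\mathbb C$, $\eta_{p,q}(z_1,\dots,z_p,\hat z_1,\dots,\hat z_q)\in\mathbb R^p$ is the vector whose $j$-th entry is $\prod_{l=1}^q|z_j-\hat z_l|$. For an integer $k\ge1$: $\xi(1)=\frac12$; $\xi(k)=\frac{(\frac{k-1}{2})!(\frac{k-3}{2})!}{4}$ if $k\ge3$ is odd; $\xi(k)=\frac{((\frac{k-2}{2})!)^2}{4}$ if $k$ is even. *)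

(* Defs.v *)
From Stdlib Require Import Reals Lra Lia List Arith.
Import ListNotations.
Open Scope R_scope.

Definition Rprod_list (l : list R) : R := fold_right Rmult 1 l.

(* The sup-norm of eta_{p,q}(z_1..z_p, zh_1..zh_q), for real inputs
   z_j = z (j-1) (j = 1..p) and zh_l = zh (l-1) (l = 1..q):
   max_j prod_l |z_j - zh_l|.  Entries are >= 0 so 0 is a valid seed for max. *)
Definition eta_inf (p q : nat) (z zh : nat -> R) : R :=
  fold_right Rmax 0
    (map (fun j => Rprod_list (map (fun l => Rabs (z j - zh l)) (seq 0 q)))
         (seq 0 p)).

(* theta_min = min_{p <> j} |theta_p - theta_j| over indices 0..n-1.
   Seed |th 0 - th 1| belongs to the list whenever n >= 2. *)
Definition theta_min (n : nat) (th : nat -> R) : R :=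
  fold_right Rmin (Rabs (th 0%nat - th 1%nat))
    (flat_map (fun p =>
       map (fun j => Rabs (th p - th j))
           (filter (fun j => negb (Nat.eqb p j)) (seq 0 n)))
     (seq 0 n)).

Definition xi (k : nat) : R :=
  if Nat.eqb k 1 then 1 / 2
  else if Nat.even k then (INR (fact ((k - 2) / 2))) ^ 2 / 4
  else INR (fact ((k - 1) / 2)) * INR (fact ((k - 3) / 2)) / 4.

(* Main.v *)
Require Import Defs.
From Stdlib Require Import Reals Lra Lia List Arith.
Open Scope R_scope.

Lemma even_nat (m : nat) : (4^m * (fact m * fact m) <= fact (2*m+2))%nat.
Proof.
  induction m as [|m IH]. { simpl. lia. }
  replace (2 * S m + 2)%nat with (S (S (2*m+2))) by lia.
  cbn [fact]. rewrite Nat.pow_succ_r'.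
  assert (H : (4 * (S m * S m) <= S (S (2*m+2)) * S (2*m+2))%nat) by nia.
  nia.
Qed.

Lemma even_R (m : nat) : 4^m * (INR (fact m) * INR (fact m)) <= INR (fact (2*m+2)).
Proof.
  pose proof (even_nat m) as H. apply le_INR in H.
  rewrite !mult_INR, pow_INR in H. replace (INR 4) with 4 in H by (simpl; lra). exact H.
Qed.

Lemma xi_bound (k : nat) : (1 <= k)%nat -> xi k * 2^k <= INR (fact k).
Proof.
  intros hk. unfold xi.
  destruct (Nat.Even_or_Odd k) as [[m Hm]|[m Hm]]; subst k.
  - destruct m as [|m']; [lia|].
    replace (Nat.eqb (2 * S m') 1) with false by (symmetry; apply Nat.eqb_neq; lia).
    rewrite Nat.even_even.
    replace ((2 * S m' - 2)/2)%nat with m'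
      by (replace (2 * S m' - 2)%nat with (m'*2)%nat by lia; rewrite Nat.div_mul; lia).
    pose proof (even_R m') as H.
    replace (2 * S m')%nat with (2*m'+2)%nat by lia.
    replace (2^(2*m'+2)) with (4^m' * 4) by (rewrite pow_add, pow_mult; replace (2^2) with 4 by (simpl; ring); ring).
    replace (INR (fact m') ^ 2 / 4 * (4 ^ m' * 4)) with (4^m' * (INR (fact m') * INR (fact m'))) by field.
    exact H.
  - destruct m as [|m'].
    + simpl. lra.
    + replace (Nat.eqb (2 * S m' + 1) 1) with false by (symmetry; apply Nat.eqb_neq; lia).
      rewrite Nat.even_odd.
      replace ((2 * S m' + 1 - 1)/2)%nat with (S m')
        by (replace (2 * S m' + 1 - 1)%nat with (S m'*2)%nat by lia; rewrite Nat.div_mul; lia).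
      replace ((2 * S m' + 1 - 3)/2)%nat with m'
        by (replace (2 * S m' + 1 - 3)%nat with (m'*2)%nat by lia; rewrite Nat.div_mul; lia).
      pose proof (even_R m') as H.
      replace (2 * S m' + 1)%nat with (S (2*m'+2)) by lia.
      replace (2^(S (2*m'+2))) with (4^m' * 8) by (rewrite <- Nat.add_1_r, !pow_add, pow_mult; replace (2^2) with 4 by (simpl; ring); simpl; ring).
      change (fact (S m')) with (S m' * fact m')%nat.
      change (fact (S (2*m'+2))) with (S (2*m'+2) * fact (2*m'+2))%nat.
      rewrite !mult_INR, !S_INR, plus_INR, mult_INR.
      set (X := 4^m' * (INR (fact m') * INR (fact m'))) in *.
      set (G := INR (fact (2*m'+2))) in *.
      assert (0 <= INR m') by apply pos_INR.
      assert (0 <= X) by (unfold X; apply Rmult_le_pos; [apply pow_le; lra| apply Rmult_le_pos; apply pos_INR]).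
      replace ((INR m' + 1) * INR (fact m') * INR (fact m') / 4 * (4 ^ m' * 8))
        with (2 * (INR m' + 1) * X) by (unfold X; field).
      simpl (INR 2). nra.
Qed.

Fixpoint DD (x : nat -> R) (f : R -> R) (i n : nat) : R :=
  match n with
  | O => f (x i)
  | S n' => (DD x f (S i) n' - DD x f i n') / (x (i + S n')%nat - x i)
  end.

Section DDs.
Variable x : nat -> R.
Variable K : nat.
Hypothesis hx : forall a b, (a < b)%nat -> (b <= K)%nat -> x a < x b.

Lemma DD_leib (f g : R -> R) (h : R) (hf : forall t, f t = (t - h) * g t) :
  forall n i, (i + S n <= K)%nat ->
  DD x f i (S n) = (x i - h) * DD x g i (S n) + DD x g (S i) n.
Proof.
  induction n as [|n IH]; intros i Hi.
  - cbn [DD]. rewrite !hf. replace (i + 1)%nat with (S i) by lia.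
    assert (x i < x (S i)) by (apply hx; lia). field. lra.
  - assert (HP : DD x f i (S (S n)) = (DD x f (S i) (S n) - DD x f i (S n)) / (x (i + S (S n))%nat - x i)) by reflexivity.
    assert (HG : DD x g i (S (S n)) = (DD x g (S i) (S n) - DD x g i (S n)) / (x (i + S (S n))%nat - x i)) by reflexivity.
    assert (HA : DD x g (S i) (S n) = (DD x g (S (S i)) n - DD x g (S i) n) / (x (S i + S n)%nat - x (S i))) by reflexivity.
    rewrite HP, HG, (IH (S i)) by lia. rewrite (IH i) by lia.
    replace (S i + S n)%nat with (i + S (S n))%nat in HA by lia.
    assert (x i < x (S i)) by (apply hx; lia).
    assert (x (S i) < x (i + S (S n))%nat) by (apply hx; lia).
    set (A := DD x g (S i) (S n)) in *.
    set (B := DD x g (S (S i)) n) in *.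
    set (E := DD x g (S i) n) in *.
    set (C := DD x g i (S n)) in *.
    assert (HB : B = A * (x (i + S (S n))%nat - x (S i)) + E) by (rewrite HA; field; lra).
    rewrite HB. field. lra.
Qed.

Lemma DD_const (f : R -> R) (c : R) (hf : forall t, f t = c) :
  forall n i, DD x f i (S n) = 0.
Proof.
  induction n as [|n IH]; intros i.
  - cbn [DD]. rewrite !hf. unfold Rdiv. ring.
  - change (DD x f i (S (S n))) with ((DD x f (S i) (S n) - DD x f i (S n)) / (x (i + S (S n))%nat - x i)).
    rewrite !IH. unfold Rdiv. ring.
Qed.

Fixpoint Pm (h : nat -> R) (m : nat) (t : R) : R :=
  match m with O => 1 | S m' => (t - h m') * Pm h m' t end.

Lemma DD_Pm (h : nat -> R) : forall m n i, (i + n <= K)%nat -> (m <= n)%nat ->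
  DD x (Pm h m) i n = if Nat.eq_dec m n then 1 else 0.
Proof.
  induction m as [|m IH]; intros n i Hi Hmn.
  - destruct n as [|n].
    + reflexivity.
    + rewrite (DD_const _ 1) by reflexivity. destruct (Nat.eq_dec 0 (S n)); [lia|reflexivity].
  - destruct n as [|n]; [lia|].
    rewrite (DD_leib (Pm h (S m)) (Pm h m) (h m)) by (reflexivity || lia).
    rewrite (IH (S n) i) by lia. rewrite (IH n (S i)) by lia.
    destruct (Nat.eq_dec m (S n)); [lia|].
    destruct (Nat.eq_dec m n); destruct (Nat.eq_dec (S m) (S n)); try lia; ring.
Qed.

Variable d : R.
Hypothesis hd0 : 0 <= d.
Hypothesis hd : forall j, (j < K)%nat -> d <= x (S j) - x j.

Lemma gap : forall n i, (i + n <= K)%nat -> INR n * d <= x (i + n)%nat - x i.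
Proof.
  induction n as [|n IH]; intros i Hi.
  - rewrite Nat.add_0_r. simpl. lra.
  - rewrite S_INR. replace (i + S n)%nat with (S (i + n)) by lia.
    pose proof (IH i ltac:(lia)). pose proof (hd (i + n)%nat ltac:(lia)). lra.
Qed.

Lemma DD_bound (f : R -> R) (M : R) :
  forall n i, (i + n <= K)%nat -> (forall j, (i <= j <= i + n)%nat -> Rabs (f (x j)) <= M) ->
  Rabs (DD x f i n) * INR (fact n) * d ^ n <= M * 2 ^ n.
Proof.
  induction n as [|n IH]; intros i Hi HM.
  - simpl. rewrite !Rmult_1_r. apply HM. lia.
  - change (DD x f i (S n)) with ((DD x f (S i) n - DD x f i n) / (x (i + S n)%nat - x i)).
    pose proof (IH (S i) ltac:(lia) ltac:(intros j Hj; apply HM; lia)) as H1.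
    pose proof (IH i ltac:(lia) ltac:(intros j Hj; apply HM; lia)) as H2.
    pose proof (gap (S n) i Hi) as Hg.
    assert (Hpos : x i < x (i + S n)%nat) by (apply hx; lia).
    set (A := DD x f (S i) n) in *. set (B := DD x f i n) in *.
    set (D := x (i + S n)%nat - x i) in *.
    assert (HD : 0 < D) by (unfold D; lra).
    change (fact (S n)) with (S n * fact n)%nat. rewrite mult_INR.
    set (F := INR (fact n)) in *. set (Dn := d ^ n) in *.
    assert (0 <= F) by apply pos_INR.
    assert (0 <= Dn) by (apply pow_le; lra).
    unfold Rdiv. rewrite Rabs_mult, Rabs_inv, (Rabs_pos_eq D) by lra.
    set (r := Rabs (A - B) * / D).
    assert (Hr : r * D = Rabs (A - B)) by (unfold r; field; lra).
    assert (0 <= r) by (unfold r; apply Rmult_le_pos; [apply Rabs_pos|left; apply Rinv_0_lt_compat; lra]).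
    pose proof (Rabs_triang A (- B)) as Ht. rewrite Rabs_Ropp in Ht. replace (A + - B) with (A - B) in Ht by ring.
    assert (HrS : r * (INR (S n) * d) <= r * D) by (apply Rmult_le_compat_l; lra).
    assert (0 <= F * Dn) by (apply Rmult_le_pos; lra).
    assert (r * (INR (S n) * d) * (F * Dn) <= r * D * (F * Dn)) by (apply Rmult_le_compat_r; lra).
    simpl (d ^ S n). simpl (2 ^ S n). fold Dn.
    assert (Rabs (A - B) * (F*Dn) <= (Rabs A + Rabs B) * (F*Dn)) by (apply Rmult_le_compat_r; lra).
    replace (r * (INR (S n) * F) * (d * Dn)) with (r * (INR (S n) * d) * (F * Dn)) by ring.
    nra.
Qed.
End DDs.

Lemma fold_mult_c (c : R) (l : list R) : fold_right Rmult c l = c * fold_right Rmult 1 l.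
Proof. induction l; simpl; [ring| rewrite IHl; ring]. Qed.

Lemma prod_Pm (h : nat -> R) (t : R) : forall m,
  Rprod_list (map (fun l => Rabs (t - h l)) (seq 0 m)) = Rabs (Pm h m t).
Proof.
  induction m as [|m IH].
  - simpl. rewrite Rabs_R1. reflexivity.
  - rewrite seq_S, map_app. unfold Rprod_list in *. rewrite fold_right_app.
    cbn [map fold_right]. rewrite fold_mult_c, IH.
    cbn [Pm]. rewrite Rabs_mult. simpl (0 + m)%nat. ring.
Qed.

Lemma max_ge (l : list R) (y : R) : In y l -> y <= fold_right Rmax 0 l.
Proof.
  induction l; simpl; [tauto|]. intros [<-|H].
  - apply Rmax_l.
  - eapply Rle_trans; [apply IHl; exact H| apply Rmax_r].
Qed.

Lemma min_le (l : list R) (s y : R) : In y l -> fold_right Rmin s l <= y.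
Proof.
  induction l; simpl; [tauto|]. intros [<-|H].
  - apply Rmin_l.
  - eapply Rle_trans; [apply Rmin_r| apply IHl; exact H].
Qed.

Lemma min_nonneg (l : list R) (s : R) : 0 <= s -> (forall y, In y l -> 0 <= y) -> 0 <= fold_right Rmin s l.
Proof.
  induction l; simpl; intros Hs H; [exact Hs|].
  apply Rmin_glb; [apply H; auto| apply IHl; auto].
Qed.

Lemma eta_ge (k : nat) (th ht : nat -> R) (j : nat) : (j <= k)%nat ->
  Rabs (Pm ht k (th j)) <= eta_inf (S k) k th ht.
Proof.
  intros Hj. unfold eta_inf. apply max_ge. rewrite <- prod_Pm.
  apply in_map_iff. exists j. split; [reflexivity|]. apply in_seq. lia.
Qed.

Lemma tmin_nonneg (n : nat) (th : nat -> R) : 0 <= theta_min n th.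
Proof.
  unfold theta_min. apply min_nonneg; [apply Rabs_pos|].
  intros y Hy. apply in_flat_map in Hy as [p [_ Hy]].
  apply in_map_iff in Hy as [j [<- _]]. apply Rabs_pos.
Qed.

Lemma tmin_le (k : nat) (th : nat -> R) (j : nat) : (j < k)%nat ->
  theta_min (S k) th <= Rabs (th j - th (S j)).
Proof.
  intros Hj. unfold theta_min. apply min_le.
  apply in_flat_map. exists j. split; [apply in_seq; lia|].
  apply in_map_iff. exists (S j). split; [reflexivity|].
  apply filter_In. split; [apply in_seq; lia|].
  replace (Nat.eqb j (S j)) with false by (symmetry; apply Nat.eqb_neq; lia). reflexivity.
Qed.

Theorem lemma3p6 (k : nat) (hk : (1 <= k)%nat) (th : nat -> R)
  (hinc : forall i : nat, (i < k)%nat -> th i < th (S i))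
  (hlo : - (PI / 2) <= th 0%nat) (hhi : th k <= PI / 2) :
  forall ht : nat -> R,
    xi k * (theta_min (S k) th) ^ k <= eta_inf (S k) k th ht.
Proof.
  intros ht.
  assert (hx : forall a b, (a < b)%nat -> (b <= k)%nat -> th a < th b).
  { intros a b Hab. induction b as [|b IH]; [lia|]. intros Hb.
    destruct (Nat.eq_dec a b) as [->|Hne]; [apply hinc; lia|].
    eapply Rlt_trans; [apply IH; lia| apply hinc; lia]. }
  set (d := theta_min (S k) th).
  set (M := eta_inf (S k) k th ht).
  assert (hd0 : 0 <= d) by apply tmin_nonneg.
  assert (hd : forall j, (j < k)%nat -> d <= th (S j) - th j).
  { intros j Hj. pose proof (tmin_le k th j Hj) as H. fold d in H.
    pose proof (hinc j Hj). rewrite Rabs_minus_sym, Rabs_pos_eq in H by lra. exact H. }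
  assert (H1 : DD th (Pm ht k) 0 k = 1).
  { rewrite (DD_Pm th k hx ht k k 0) by lia. destruct (Nat.eq_dec k k); [reflexivity|lia]. }
  pose proof (DD_bound th k hx d hd0 hd (Pm ht k) M k 0 ltac:(lia)
     ltac:(intros j Hj; apply eta_ge; lia)) as Hb.
  rewrite H1, Rabs_R1, Rmult_1_l in Hb.
  pose proof (xi_bound k hk) as Hxi.
  assert (Hp : 0 < 2 ^ k) by (apply pow_lt; lra).
  assert (Hdk : 0 <= d ^ k) by (apply pow_le; lra).
  assert (Hc : xi k * d ^ k * 2 ^ k <= M * 2 ^ k).
  { replace (xi k * d ^ k * 2 ^ k) with ((xi k * 2 ^ k) * d ^ k) by ring.
    eapply Rle_trans; [apply Rmult_le_compat_r; [exact Hdk| exact Hxi]| exact Hb]. }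
  apply Rmult_le_reg_r with (2 ^ k); assumption.
Qed.
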